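(* There exist $n,k\in\mathbb{N}$ with $k\le n$ such that for every 2-coloring of the edges of $B_{n,k}$, there exists an induced monochromatic copy of $B_{4,2}$ in $B_{n,k}$; that is, there is a set $V'$ of vertices of $B_{n,k}$ such that the induced subgraph of $B_{n,k}$ on $V'$ is isomorphic to $B_{4,2}$ and all of its edges receive the same color.
   Context: For $n\in\mathbb{N}$, $[n]=\{1,\dots,n\}$, and for a set $X$, $\binom{X}{k}$ denotes the set of $k$-element subsets of $X$. For $k\le n$, $B_{n,k}$ is the bipartite graph with left vertex set $[n]$, right vertex set $\binom{[n]}{k}$, and edge set $\{(x,X)\in[n]\times\binom{[n]}{k} : x\in X\}$. For a graph $H=(V,E)$ and $V'\subseteq V$, the induced subgraph on $V'$ has vertex set $V'$ and edge set consisting of all edges of $H$ with both endpoints in $V'$. A 2-coloring of the edges is a map from the edge set to a 2-element set of colors. *)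

(* Defs.v *)
From mathcomp Require Import all_boot.
Set Implicit Arguments. Unset Strict Implicit. Unset Printing Implicit Defensive.

(* k-element subsets of [n] = 'I_n (elements 0..n-1 stand for 1..n) *)
Definition kset (n k : nat) := {X : {set 'I_n} | #|X| == k}.

(* Vertices of B_{n,k}: left part [n] (inl), right part binom([n],k) (inr). *)
Definition vert (n k : nat) := ('I_n + kset n k)%type.

Definition edge (n k : nat) := {p : 'I_n * kset n k | p.1 \in val p.2}.

Definition adj (n k : nat) (u v : vert n k) : bool :=
  match u, v with
  | inl x, inr X => x \in val X
  | inr X, inl x => x \in val X
  | _, _ => false
  end.

Definition induced_iso (m l n k : nat) (V' : {set vert n k})
  (f : vert m l -> vert n k) : Prop :=
  [/\ injective f, (forall v, f v \in V'),
      (forall w, w \in V' -> exists v, f v = w) &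
      (forall u v, adj u v = adj (f u) (f v))].

Definition monochromatic (n k : nat) (C : Type) (c : edge n k -> C)
  (V' : {set vert n k}) : Prop :=
  exists col : C, forall e : edge n k,
    inl (val e).1 \in V' -> inr (val e).2 \in V' -> c e = col.

(* Main.v *)
Require Import Defs.
From mathcomp Require Import all_boot.
From mathcomp Require Import zify.
Set Implicit Arguments. Unset Strict Implicit. Unset Printing Implicit Defensive.

Definition clique (T : finType) (r : rel T) (A : {set T}) :=
  forall x y, x \in A -> y \in A -> x != y -> r x y.

Lemma clique_add (T : finType) (r : rel T) (v : T) (A : {set T}) :
  (forall x y, r x y = r y x) -> clique r A -> (forall y, y \in A -> r v y) ->
  clique r (v |: A).
Proof.
move=> rS cA hv x y; rewrite !in_setU1 => /orP[/eqP->|xA] /orP[/eqP->|yA].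
- by rewrite eqxx.
- by move=> _; apply: hv.
- by move=> _; rewrite rS; apply: hv.
- exact: cA.
Qed.

Lemma ramsey (a b : nat) : exists N, forall (T : finType) (r : rel T),
  (forall x y, r x y = r y x) -> forall S : {set T}, N <= #|S| ->
  (exists A : {set T}, [/\ A \subset S, #|A| = a & clique r A]) \/
  (exists A : {set T}, [/\ A \subset S, #|A| = b & clique (fun x y => ~~ r x y) A]).
Proof.
elim: a b => [|a IHa] b.
  exists 0 => T r rS S _; left; exists set0; split; rewrite ?sub0set ?cards0 //.
  by move=> x y; rewrite in_set0.
elim: b => [|b IHb].
  exists 0 => T r rS S _; right; exists set0; split; rewrite ?sub0set ?cards0 //.
  by move=> x y; rewrite in_set0.
have [N1 H1] := IHa b.+1; have [N2 H2] := IHb.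
exists (N1 + N2).+1 => T r rS S hS.
have /card_gt0P [v vS] : 0 < #|S| by lia.
pose P := [set y | r v y].
have hc := cardsID P (S :\ v).
have hv := cardsD1 v S; rewrite vS in hv.
have sub1 : (S :\ v) :&: P \subset S by apply/subsetP => y; rewrite !inE => /andP[/andP[]].
have sub2 : (S :\ v) :\: P \subset S by apply/subsetP => y; rewrite !inE => /andP[_ /andP[]].
have [le1|le2] : N1 <= #|(S :\ v) :&: P| \/ N2 <= #|(S :\ v) :\: P| by lia.
- case: (H1 T r rS _ le1) => [[A [sA cA kA]]|[A [sA cA kA]]].
  + left; exists (v |: A); split.
    * by rewrite subUset sub1set vS (subset_trans sA sub1).
    * rewrite cardsU1 cA; have -> : v \notin A.
        by apply/negP => /(subsetP sA); rewrite !inE eqxx /= ?andbF.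
      by [].
    * apply: clique_add => // y /(subsetP sA); rewrite !inE; by case/andP.
  + by right; exists A; split => //; apply: subset_trans sA sub1.
- case: (H2 T r rS _ le2) => [[A [sA cA kA]]|[A [sA cA kA]]].
  + by left; exists A; split => //; apply: subset_trans sA sub2.
  + right; exists (v |: A); split.
    * by rewrite subUset sub1set vS (subset_trans sA sub2).
    * rewrite cardsU1 cA; have -> : v \notin A.
        by apply/negP => /(subsetP sA); rewrite !inE eqxx /= ?andbF.
      by [].
    * apply: clique_add => //; first by move=> x y; rewrite rS.
      move=> y /(subsetP sA); rewrite !inE; by case/andP.
Qed.

Lemma sum_bool_card (T : finType) (S : {set T}) (p : pred T) :
  \sum_(z in S) (p z : nat) = #|[set z in S | p z]|.
Proof.
rewrite -sum1_card big_mkcond /= [RHS]big_mkcond /=; apply: eq_bigr => z _.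
by rewrite !inE; case: (z \in S); case: (p z).
Qed.

Lemma count_bound (T : finType) (m : T -> T -> T -> bool) (S : {set T}) :
  (forall x y z, x \in S -> y \in S -> z \in S -> x != y -> x != z -> y != z ->
     [|| m x y z, m x z y | m y z x]) ->
  (forall x y, x \in S -> y \in S -> #|[set z in S | m x y z]| <= 4) ->
  #|S| <= 15.
Proof.
move=> cov bnd.
set s := #|S|.
pose d (x y z : T) := [&& x != y, x != z & y != z].
have E1 : \sum_(x in S) \sum_(y in S) \sum_(z in S) (m x y z : nat) <= s * (s * 4).
  have h1 : forall x y, x \in S -> y \in S -> \sum_(z in S) (m x y z : nat) <= 4.
    by move=> x y xS yS; rewrite sum_bool_card; apply: bnd.
  have h2 : forall x, x \in S -> \sum_(y in S) \sum_(z in S) (m x y z : nat) <= s * 4.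
    move=> x xS; rewrite -/s -sum_nat_const; apply: leq_sum => y yS; exact: h1.
  rewrite -sum_nat_const; apply: leq_sum => x xS; exact: h2.
have E2 : \sum_(x in S) \sum_(y in S) \sum_(z in S) (m x z y : nat) <= s * (s * 4).
  apply: leq_trans E1; rewrite leq_eqVlt; apply/orP; left; apply/eqP.
  by apply: eq_bigr => x _; rewrite exchange_big.
have E3 : \sum_(x in S) \sum_(y in S) \sum_(z in S) (m y z x : nat) <= s * (s * 4).
  apply: leq_trans E1; rewrite leq_eqVlt; apply/orP; left; apply/eqP.
  rewrite exchange_big; apply: eq_bigr => y _; by rewrite exchange_big.
have E4 : \sum_(x in S) \sum_(y in S) \sum_(z in S) (d x y z : nat) <=
   \sum_(x in S) \sum_(y in S) \sum_(z in S) (m x y z + m x z y + m y z x).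
  apply: leq_sum => x xS; apply: leq_sum => y yS; apply: leq_sum => z zS.
  rewrite /d; case: (boolP (x != y)) => // xy; case: (boolP (x != z)) => // xz;
  case: (boolP (y != z)) => // yz /=.
  by have := cov x y z xS yS zS xy xz yz; case: (m x y z); case: (m x z y); case (m y z x).
have E5 : \sum_(x in S) \sum_(y in S) \sum_(z in S) (d x y z : nat) = s * ((s - 1) * (s - 2)).
  have c1 : forall x y, x \in S -> y \in S -> \sum_(z in S) (d x y z : nat) = (y != x) * (s - 2).
    move=> x y xS yS; rewrite sum_bool_card.
    case: (eqVneq y x) => [->|yx].
      rewrite /= mul0n; apply/eqP; rewrite cards_eq0; apply/eqP/setP => z.
      by rewrite !inE /d eqxx /= andbF.
    have -> : [set z in S | d x y z] = S :\: [set x; y].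
      apply/setP => z; rewrite !inE /d.
      rewrite eq_sym yx /= [x == z]eq_sym [y == z]eq_sym; by case: (z \in S); case: (z == x); case: (z == y).
    rewrite cardsD (setIidPr _); last by rewrite subUset !sub1set xS yS.
    by rewrite cards2 eq_sym yx /= mul1n.
  rewrite -sum_nat_const; apply: eq_bigr => x xS.
  rewrite (eq_bigr (fun y => (y != x) * (s - 2))); last by move=> y yS; apply: c1.
  rewrite -big_distrl /= sum_bool_card; congr (_ * _).
  have -> : [set y in S | y != x] = S :\ x by apply/setP => y; rewrite !inE andbC.
  by have := cardsD1 x S; rewrite xS /s; lia.
have E6 : \sum_(x in S) \sum_(y in S) \sum_(z in S) (m x y z + m x z y + m y z x)
   = \sum_(x in S) \sum_(y in S) \sum_(z in S) (m x y z : nat) +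
     \sum_(x in S) \sum_(y in S) \sum_(z in S) (m x z y : nat) +
     \sum_(x in S) \sum_(y in S) \sum_(z in S) (m y z x : nat).
  rewrite -!big_split; apply: eq_bigr => x _; rewrite -!big_split; apply: eq_bigr => y _.
  by rewrite -!big_split.
rewrite E6 E5 in E4.
have : s * ((s - 1) * (s - 2)) <= 3 * (s * (s * 4)) by lia.
rewrite -/s; case: (leqP s 15) => // h16.
nia.
Qed.

Definition chi n (c : edge n 3 -> bool) (X : {set 'I_n}) (x : 'I_n) : bool :=
  match (insub X : option (kset n 3)) with
  | Some K => match (insub (x, K) : option (edge n 3)) with
              | Some e => c e | None => false end
  | None => false end.

Lemma chiE n (c : edge n 3 -> bool) (e : edge n 3) : chi c (val (val e).2) (val e).1 = c e.
Proof.
case: e => [[x K] h] /=; rewrite /chi valK.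
have -> : (insub (x, K) : option (edge n 3)) = Some (exist _ (x, K) h).
  exact: (valK (exist _ (x, K) h : edge n 3)).
by [].
Qed.

Definition mono n (c : edge n 3 -> bool) (b : bool) (x y z : 'I_n) :=
  [&& x != y, x != z, y != z, chi c [set x; y; z] x == b & chi c [set x; y; z] y == b].
Definition monoA n (c : edge n 3 -> bool) x y z := mono c true x y z || mono c false x y z.
Definition good n (c : edge n 3 -> bool) x y := 5 <= #|[set z | monoA c x y z]|.
Definition colr n (c : edge n 3 -> bool) x y := 3 <= #|[set z | mono c true x y z]|.

Lemma set3C (T : finType) (x y z : T) : [set y; x; z] = [set x; y; z].
Proof. by apply/setP => w; rewrite !inE; case: (w == x); case: (w == y); case: (w == z). Qed.
Lemma set3C' (T : finType) (x y z : T) : [set x; z; y] = [set x; y; z].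
Proof. by apply/setP => w; rewrite !inE; case: (w == x); case: (w == z); case: (w == y). Qed.
Lemma set3C'' (T : finType) (x y z : T) : [set y; z; x] = [set x; y; z].
Proof. by apply/setP => w; rewrite !inE; case: (w == x); case: (w == y); case: (w == z). Qed.

Lemma mono_sym n c b (x y z : 'I_n) : mono c b x y z = mono c b y x z.
Proof.
rewrite /mono set3C [y == x]eq_sym; set X := [set _; _; _].
by case: (x == y); case: (x != z); case: (y != z); case: (chi c X x == b);
  case: (chi c X y == b).
Qed.

Lemma monoA_sym n c (x y z : 'I_n) : monoA c x y z = monoA c y x z.
Proof. by rewrite /monoA !(mono_sym _ _ x). Qed.

Lemma good_sym n c (x y : 'I_n) : good c x y = good c y x.
Proof.
by rewrite /good; congr (_ <= _); apply: eq_card => z; rewrite !inE monoA_sym.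
Qed.

Lemma colr_sym n c (x y : 'I_n) : colr c x y = colr c y x.
Proof.
by rewrite /colr; congr (_ <= _); apply: eq_card => z; rewrite !inE mono_sym.
Qed.

Lemma cover n c (x y z : 'I_n) : x != y -> x != z -> y != z ->
  [|| monoA c x y z, monoA c x z y | monoA c y z x].
Proof.
move=> xy xz yz; have yx : y != x by rewrite eq_sym.
have zx : z != x by rewrite eq_sym. have zy : z != y by rewrite eq_sym.
rewrite /monoA /mono (set3C' x y z) (set3C'' x y z) xy xz yz yx zx zy /=.
case: (chi c [set x; y; z] x); case: (chi c [set x; y; z] y);
  case: (chi c [set x; y; z] z) => //.
Qed.

Lemma build n (c : edge n 3 -> bool) (b : bool) (A : {set 'I_n}) :
  #|A| = 4 ->
  (forall x y, x \in A -> y \in A -> x != y -> 3 <= #|[set z | mono c b x y z]|) ->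
  exists (V' : {set vert n 3}) (f : vert 4 2 -> vert n 3),
    induced_iso V' f /\ monochromatic c V'.
Proof.
move=> hA hw.
pose a (i : 'I_4) : 'I_n := enum_val (cast_ord (esym hA) i).
have aA i : a i \in A by apply: enum_valP.
have ainj : injective a by move=> i j /enum_val_inj /cast_ord_inj.
have wit : forall i j, i != j -> exists z, z \notin A /\ mono c b (a i) (a j) z.
  move=> i j ij.
  have aij : a i != a j by rewrite (inj_eq ainj).
  case: (pickP [pred z | (z \notin A) && mono c b (a i) (a j) z]) => [z /andP[h1 h2]|none].
    by exists z.
  have sub : [set z | mono c b (a i) (a j) z] \subset A :\: [set a i; a j].
    apply/subsetP => z; rewrite !inE => hm.
    have := none z; rewrite /= hm andbT => /negbFE ->.
    move: hm; rewrite /mono => /and5P[_ h1 h2 _ _].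
    by rewrite andbT negb_or eq_sym h1 eq_sym h2.
  have := subset_leq_card sub.
  rewrite cardsD (setIidPr _); last by rewrite subUset !sub1set !aA.
  rewrite cards2 aij hA.
  have := hw _ _ (aA i) (aA j) aij; lia.
pose P (Y : kset 4 2) (X : kset n 3) :=
  ([set i | a i \in val X] == val Y) && [forall i, (i \in val Y) ==> (chi c (val X) (a i) == b)].
have hex : forall Y, exists X, P Y X.
  case=> Y0 hY; have /cards2P [i [j [ij eY]]] := hY.
  have [z [zA hm]] := wit i j ij.
  have hm' := hm; move: hm' => /and5P[h3 h1 h4 h5 h6].
  have h3' : #|[set a i; a j; z]| == 3.
    rewrite setUC cardsU1 cards2 !inE h3.
    by rewrite ![z == _]eq_sym (negbTE h1) (negbTE h4).
  exists (exist (fun X : {set 'I_n} => #|X| == 3) _ h3'); rewrite /P /= eY; apply/andP; split.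
    apply/eqP/setP => k; rewrite !inE !(inj_eq ainj).
    have -> : (a k == z) = false.
      by apply/negbTE; apply/negP => /eqP hk; move: zA; rewrite -hk aA.
    by rewrite orbF.
  apply/forallP => k; apply/implyP; rewrite !inE => /orP[]/eqP->.
    exact: h5.
  exact: h6.
pose g Y := xchoose (hex Y).
have gP Y : P Y (g Y) := xchooseP (hex Y).
have gY Y : [set i | a i \in val (g Y)] = val Y by have /andP[/eqP -> _] := gP Y.
have gc (Y : kset 4 2) (i : 'I_4) : i \in val Y -> chi c (val (g Y)) (a i) = b.
  by have /andP[_ /forallP /(_ i) /implyP h] := gP Y => /h /eqP.
pose f (v : vert 4 2) : vert n 3 := match v with inl i => inl (a i) | inr Y => inr (g Y) end.
exists (f @: [set: vert 4 2]), f; split.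
  split.
  - case=> [i|Y] [j|Z] //= [].
      by move/ainj ->.
    move=> hYZ.
    congr inr; apply: val_inj; by rewrite -gY hYZ gY.
  - by move=> v; apply: imset_f; rewrite inE.
  - by move=> w /imsetP [v _ ->]; exists v.
  - case=> [i|Y] [j|Z] //=; by rewrite -gY inE.
exists b; case=> [[x X] h] /= /imsetP [[i|Y] _ //= [ex]] /imsetP [[j|Z] _ //= [eX]].
subst x X; rewrite -(chiE c (exist _ (a i, g Z) h)) /=.
apply: gc; by rewrite -gY inE.
Qed.

Theorem mainTheorem3 :
  exists n k : nat, k <= n /\
    forall c : edge n k -> bool,
      exists (V' : {set vert n k}) (f : vert 4 2 -> vert n k),
        induced_iso V' f /\ monochromatic c V'.
Proof.
have [N2 HN2] := ramsey 4 4.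
have [N1 HN1] := ramsey 16 N2.
exists (N1 + 3), 3; split; first by lia.
move=> c.
have hT : N1 <= #|[set: 'I_(N1 + 3)]| by rewrite cardsT card_ord; lia.
have gs : forall x y : 'I_(N1 + 3), ~~ good c x y = ~~ good c y x.
  by move=> x y; rewrite good_sym.
case: (HN1 _ (fun x y => ~~ good c x y) gs _ hT) => [[A [_ hA cl]]|[B [_ hB cl]]].
  exfalso.
  have : #|A| <= 15.
    apply: (@count_bound _ (monoA c)).
      by move=> x y z _ _ _; apply: cover.
    move=> x y xA yA.
    case: (eqVneq x y) => [<-|xy].
      rewrite (_ : [set z in A | monoA c x x z] = set0) ?cards0 //.
      by apply/setP => z; rewrite !inE /monoA /mono eqxx /= andbF.
    apply: leq_trans (subset_leq_card (_ : _ \subset [set z | monoA c x y z])) _.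
      by apply/subsetP => z; rewrite !inE => /andP[].
    by have := cl x y xA yA xy; rewrite /good; lia.
  by rewrite hA.
have hB' : N2 <= #|B| by rewrite hB.
case: (HN2 _ (colr c) (@colr_sym _ c) B hB') => [[A [sA hA cl2]]|[A [sA hA cl2]]].
  apply: (@build _ c true A hA) => x y xA yA xy.
  exact: cl2.
apply: (@build _ c false A hA) => x y xA yA xy.
have := cl x y (subsetP sA _ xA) (subsetP sA _ yA) xy; rewrite negbK /good => hg.
have := cl2 x y xA yA xy; rewrite /colr => hc.
have e : [set z | monoA c x y z] = [set z | mono c true x y z] :|: [set z | mono c false x y z].
  by apply/setP => z; rewrite !inE.
have := leq_card_setU [set z | mono c true x y z] [set z | mono c false x y z].
move=> [hle _]; rewrite -e in hle; lia.
Qed.
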